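(* If a uniform preorder $(A,R)$ is cartesian, then $D(A,R)$ is cartesian, the singleton map $\eta:(A,R)\to D(A,R)$, $a\mapsto\{a\}$, is a cartesian morphism, and $\mathsf{fam}(D(A,R))$ is an indexed frame.
   Context: A uniform preorder is a pair $(A,R)$ with $A$ a set and $R\subseteq P(A\times A)$ such that $\mathrm{id}_A\in R$, $s\circ r\in R$ whenever $r,s\in R$, and $s\in R$ whenever $r\in R$ and $s\subseteq r$. A monotone map $f:(A,R)\to(B,S)$ is a function with $\{(fa,fa')\mid(a,a')\in r\}\in S$ for all $r\in R$; for monotone $f,g$, $f\le g$ iff $\{(fa,ga)\mid a\in A\}\in S$. This gives a locally ordered category $\mathsf{UOrd}$ with finite 2-products (terminal: a singleton; product $(A\times B,R\otimes S)$ where $R\otimes S$ consists of relations contained in some $r\times s$, $r\in R,s\in S$). Adjunction $f\dashv g$ means $\mathrm{id}\le g\circ f$ and $f\circ g\le\mathrm{id}$. An object is cartesian if the terminal projection and diagonal have right adjoints $\top:1\to A$ and $\wedge:A\times A\to A$; a morphism $f$ between cartesian objects is cartesian if $f\circ\wedge\cong\wedge\circ(f\times f)$ and $f\circ\top\cong\top$. $D(A,R)=(PA,DR)$ with $PA$ the powerset and $DR$ the relations on $PA$ contained in some $[r]=\{(U,V)\mid\forall a\in U\,\exists b\in V.\,(a,b)\in r\}$, $r\in R$. $\mathsf{fam}(A,R)$ is the indexed preorder (pseudofunctor $\mathsf{Set}^{op}\to\mathsf{Ord}$) $I\mapsto(A^I,\le)$ with $\varphi\le\psi$ iff $\{(\varphi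 i,\psi i)\mid i\in I\}\in R$, reindexing by precomposition. An indexed frame is an indexed preorder $\mathcal{H}$ whose fibers have finite meets preserved by reindexing, which has existential quantification (left adjoints $\exists_u\dashv u^*$ satisfying the Beck–Chevalley condition for pullbacks in $\mathsf{Set}$), and which satisfies Frobenius: $\varphi\wedge\exists_u\psi\cong\exists_u(u^*\varphi\wedge\psi)$ for all $u:J\to I$, $\varphi\in\mathcal{H}(I)$, $\psi\in\mathcal{H}(J)$. *)

(* Defs.v *)
Definition rel (A : Type) := A -> A -> Prop.
Definition urel (A : Type) := rel A -> Prop.

Definition is_uniform_preorder (A : Type) (R : urel A) : Prop :=
  R (fun x y => x = y) /\
  (forall r s : rel A, R r -> R s -> R (fun x z => exists y, r x y /\ s y z)) /\
  (forall r s : rel A, R r -> (forall x y, s x y -> r x y) -> R s).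

Definition img {A B : Type} (f : A -> B) (r : rel A) : rel B :=
  fun b b' => exists a a', r a a' /\ f a = b /\ f a' = b'.

Definition monotone {A B : Type} (R : urel A) (S : urel B) (f : A -> B) : Prop :=
  forall r, R r -> S (img f r).

Definition leq {A B : Type} (S : urel B) (f g : A -> B) : Prop :=
  S (fun b b' => exists a, f a = b /\ g a = b').

Definition iso {A B : Type} (S : urel B) (f g : A -> B) : Prop :=
  leq S f g /\ leq S g f.

Definition adjoint {A B : Type} (R : urel A) (S : urel B) (f : A -> B) (g : B -> A) : Prop :=
  monotone R S f /\ monotone S R g /\
  leq R (fun a => a) (fun a => g (f a)) /\ leq S (fun b => f (g b)) (fun b => b).

(** Terminal object: a singleton; its only uniform-preorder structure is all relations. *)
Definition unitR : urel unit := fun _ => True.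
Definition bang {A : Type} : A -> unit := fun _ => tt.

Definition prodR {A B : Type} (R : urel A) (S : urel B) : urel (A * B) :=
  fun t => exists r s, R r /\ S s /\
    (forall a b a' b', t (a, b) (a', b') -> r a a' /\ s b b').

Definition diag {A : Type} : A -> A * A := fun a => (a, a).

Definition is_top {A : Type} (R : urel A) (top : unit -> A) : Prop :=
  adjoint R unitR bang top.
Definition is_meet {A : Type} (R : urel A) (meet : A * A -> A) : Prop :=
  adjoint R (prodR R R) diag meet.

Definition cartesian (A : Type) (R : urel A) : Prop :=
  (exists top, is_top R top) /\ (exists meet, is_meet R meet).

Definition fprod {A B : Type} (f : A -> B) : A * A -> B * B :=
  fun p => (f (fst p), f (snd p)).

(** Cartesian morphism between cartesian objects (with respect to any choice of
    the right adjoints, which are unique up to iso). *)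
Definition cartesian_morphism {A B : Type} (R : urel A) (S : urel B) (f : A -> B) : Prop :=
  cartesian A R /\ cartesian B S /\ monotone R S f /\
  (forall topA meetA topB meetB,
      is_top R topA -> is_meet R meetA -> is_top S topB -> is_meet S meetB ->
      iso S (fun p => f (meetA p)) (fun p => meetB (fprod f p)) /\
      iso S (fun u => f (topA u)) topB).

Definition pset (A : Type) := A -> Prop.

Definition lift {A : Type} (r : rel A) : rel (pset A) :=
  fun U V => forall a, U a -> exists b, V b /\ r a b.

Definition DR {A : Type} (R : urel A) : urel (pset A) :=
  fun t => exists r, R r /\ (forall U V, t U V -> lift r U V).

Definition eta {A : Type} (a : A) : pset A := fun x => x = a.

Section IndexedFrame.
Variable fib : Type -> Type.
Variable le : forall I : Type, fib I -> fib I -> Prop.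
Variable reix : forall (I J : Type), (J -> I) -> fib I -> fib J.
Arguments reix {I J}.

Definition fiso (I : Type) (x y : fib I) : Prop := le I x y /\ le I y x.

Definition is_indexed_preorder : Prop :=
  (forall I (x : fib I), le I x x) /\
  (forall I (x y z : fib I), le I x y -> le I y z -> le I x z) /\
  (forall I J (u : J -> I) (x y : fib I), le I x y -> le J (reix u x) (reix u y)) /\
  (forall I (x : fib I), fiso I (reix (fun i => i) x) x) /\
  (forall I J K (u : J -> I) (v : K -> J) (x : fib I),
      fiso K (reix (fun k => u (v k)) x) (reix v (reix u x))).

Definition is_pullback {I J K P : Type} (u : J -> I) (v : K -> I)
  (p : P -> J) (q : P -> K) : Prop :=
  (forall x, u (p x) = v (q x)) /\
  (forall (Z : Type) (f : Z -> J) (g : Z -> K), (forall z, u (f z) = v (g z)) ->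
     exists h : Z -> P, (forall z, p (h z) = f z /\ q (h z) = g z) /\
       forall h' : Z -> P, (forall z, p (h' z) = f z /\ q (h' z) = g z) ->
         forall z, h' z = h z).

Definition indexed_frame : Prop :=
  is_indexed_preorder /\
  exists (top : forall I, fib I) (meet : forall I, fib I -> fib I -> fib I)
         (ex : forall I J (u : J -> I), fib J -> fib I),
    (forall I (x : fib I), le I x (top I)) /\
    (forall I (x y z : fib I), le I z (meet I x y) <-> (le I z x /\ le I z y)) /\
    (forall I J (u : J -> I), fiso J (reix u (top I)) (top J)) /\
    (forall I J (u : J -> I) (x y : fib I),
        fiso J (reix u (meet I x y)) (meet J (reix u x) (reix u y))) /\
    (forall I J (u : J -> I) (y : fib J) (x : fib I),
        le I (ex I J u y) x <-> le J y (reix u x)) /\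
    (forall I J K P (u : J -> I) (v : K -> I) (p : P -> J) (q : P -> K),
        is_pullback u v p q ->
        forall y : fib J, fiso K (reix v (ex I J u y)) (ex K P q (reix p y))) /\
    (forall I J (u : J -> I) (x : fib I) (y : fib J),
        fiso I (meet I x (ex I J u y)) (ex I J u (meet J (reix u x) y))).
End IndexedFrame.

Definition fam_fib (A : Type) : Type -> Type := fun I => I -> A.
Definition fam_le {A : Type} (R : urel A) : forall I : Type, fam_fib A I -> fam_fib A I -> Prop :=
  fun I phi psi => R (fun a a' => exists i, phi i = a /\ psi i = a').
Definition fam_reix (A : Type) : forall {I J : Type}, (J -> I) -> fam_fib A I -> fam_fib A J :=
  fun I J u phi => fun j => phi (u j).

(* Main.v *)
Require Import Defs.

Lemma up_comp {X} (R : urel X) r s : is_uniform_preorder X R -> R r -> R s ->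
  R (fun x z => exists y, r x y /\ s y z).
Proof. intros [_ [H _]]; auto. Qed.

Lemma up_sub {X} (R : urel X) (r s : rel X) : is_uniform_preorder X R -> R r ->
  (forall x y, s x y -> r x y) -> R s.
Proof. intros [_ [_ H]]; eauto. Qed.

Lemma up_id {X} (R : urel X) : is_uniform_preorder X R -> R (fun x y => x = y).
Proof. intros [H _]; auto. Qed.

Lemma leq_trans' {X Y} (S : urel Y) (f g h : X -> Y) : is_uniform_preorder Y S ->
  leq S f g -> leq S g h -> leq S f h.
Proof.
  intros U H1 H2. unfold leq in *.
  eapply up_sub; [exact U| exact (up_comp _ _ _ U H1 H2)|].
  intros x y [a [<- <-]]. exists (g a). split; eauto.
Qed.

Lemma leq_pre {X Y Z} (S : urel Y) (f g : X -> Y) (h : Z -> X) : is_uniform_preorder Y S ->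
  leq S f g -> leq S (fun z => f (h z)) (fun z => g (h z)).
Proof.
  intros U H. unfold leq in *. eapply up_sub; [exact U|exact H|].
  intros x y [a [<- <-]]. eauto.
Qed.

Lemma adj_unique {X Y} (RX : urel X) (RY : urel Y) f g g' :
  is_uniform_preorder X RX -> adjoint RX RY f g -> adjoint RX RY f g' -> leq RX g g'.
Proof.
  intros U [_ [_ [_ Hc]]] [_ [Hm' [Hu' _]]].
  unfold leq in *. specialize (Hm' _ Hc).
  eapply up_sub; [exact U| exact (up_comp _ _ _ U Hu' Hm')|].
  intros x y [b [<- <-]]. exists (g' (f (g b))). split.
  - exists (g b); auto.
  - exists (f (g b)), b. split; eauto.
Qed.

Definition full {A} : pset A := fun _ => True.
Definition topD {A} : unit -> pset A := fun _ => full.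
Definition meetD {A} (m : A * A -> A) : pset A * pset A -> pset A :=
  fun p c => exists a b, fst p a /\ snd p b /\ m (a, b) = c.

Lemma DR_up {A} (R : urel A) : is_uniform_preorder A R -> is_uniform_preorder (pset A) (DR R).
Proof.
  intros U. split; [|split].
  - exists (fun x y => x = y). split; [apply up_id; auto|].
    intros P Q <- a Ha. eauto.
  - intros t1 t2 [r1 [H1 L1]] [r2 [H2 L2]].
    exists (fun x z => exists y, r1 x y /\ r2 y z). split; [apply up_comp; auto|].
    intros P W [V [T1 T2]] a Ha.
    destruct (L1 _ _ T1 a Ha) as [b [Hb Rb]].
    destruct (L2 _ _ T2 b Hb) as [c [Hc Rc]]. eauto.
  - intros t s [r [H L]] Hs. exists r. eauto.
Qed.

Lemma meet_unit {A} (R : urel A) m : is_meet R m ->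
  R (fun x y => exists a, a = x /\ m (diag a) = y).
Proof. intros [_ [_ [H _]]]. exact H. Qed.

Lemma meet_proj {A} (R : urel A) m : is_meet R m ->
  exists r s, R r /\ R s /\ forall a b, r (m (a, b)) a /\ s (m (a, b)) b.
Proof.
  intros [_ [_ [_ H]]]. destruct H as [r [s [Hr [Hs L]]]].
  exists r, s. split; [|split]; auto. intros a b.
  apply (L (m (a, b)) (m (a, b)) a b). exists (a, b). auto.
Qed.

Lemma meet_mono {A} (R : urel A) m r s : is_uniform_preorder A R -> is_meet R m -> R r -> R s ->
  R (fun c d => exists a b a' b', r a a' /\ s b b' /\ m (a, b) = c /\ m (a', b') = d).
Proof.
  intros U [_ [Hm _]] Hr Hs.
  assert (P : prodR R R (fun p p' => r (fst p) (fst p') /\ s (snd p) (snd p'))).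
  { exists r, s. split; [|split]; auto. }
  specialize (Hm _ P). eapply up_sub; [exact U|exact Hm|].
  intros c d [a [b [a' [b' [H1 [H2 [<- <-]]]]]]].
  exists (a, b), (a', b'). simpl. auto.
Qed.

Lemma meet_pair {A} (R : urel A) m r s : is_uniform_preorder A R -> is_meet R m -> R r -> R s ->
  R (fun c d => exists a b, r c a /\ s c b /\ m (a, b) = d).
Proof.
  intros U Hm Hr Hs.
  eapply up_sub; [exact U|exact (up_comp _ _ _ U (meet_unit _ _ Hm) (meet_mono _ _ _ _ U Hm Hr Hs))|].
  intros c d [a [b [Ha [Hb <-]]]]. exists (m (c, c)). split.
  - exists c. auto.
  - exists c, c, a, b. auto.
Qed.

Lemma top_rel {A} (R : urel A) t : is_top R t -> exists r, R r /\ forall a, r a (t tt).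
Proof.
  intros [_ [_ [H _]]]. eexists. split; [exact H|]. intros a. exists a. auto.
Qed.

Lemma topD_top {A} (R : urel A) : is_uniform_preorder A R -> is_top (DR R) (@topD A).
Proof.
  intros U. split; [|split; [|split]].
  - intros r _. exact I.
  - intros r _. exists (fun x y => x = y). split; [apply up_id; auto|].
    intros P Q [a [a' [_ [<- <-]]]] x _. exists x. split; [exact I|auto].
  - exists (fun x y => x = y). split; [apply up_id; auto|].
    intros P Q [a [<- <-]] x _. exists x. split; [exact I|auto].
  - exact I.
Qed.

Lemma meetD_meet {A} (R : urel A) m : is_uniform_preorder A R -> is_meet R m ->
  is_meet (DR R) (meetD m).
Proof.
  intros U Hm. split; [|split; [|split]].
  - intros t Ht. exists t, t. split; [|split]; auto.
    intros a b a' b' [x [x' [H [E1 E2]]]]. unfold diag in *.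
    injection E1; injection E2; intros; subst; auto.
  - intros t [r1 [r2 [[p1 [Hp1 L1]] [[p2 [Hp2 L2]] L]]]].
    exists (fun c d => exists a b a' b', p1 a a' /\ p2 b b' /\ m (a, b) = c /\ m (a', b') = d).
    split; [apply meet_mono; auto|].
    intros P Q [[u1 u2] [[v1 v2] [Ht [<- <-]]]] c [a [b [Ha [Hb <-]]]].
    destruct (L _ _ _ _ Ht) as [T1 T2]. simpl in *.
    destruct (L1 _ _ T1 a Ha) as [a' [Ha' Ra]].
    destruct (L2 _ _ T2 b Hb) as [b' [Hb' Rb]].
    exists (m (a', b')). split.
    + exists a', b'. auto.
    + exists a, b, a', b'. auto.
  - exists (fun x y => exists a, a = x /\ m (diag a) = y). split; [apply meet_unit; auto|].
    intros P Q [V [<- <-]] c Hc. exists (m (c, c)). split.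
    + exists c, c. auto.
    + exists c. auto.
  - destruct (meet_proj R m Hm) as [r [s [Hr [Hs L]]]].
    exists (lift r), (lift s). split; [exists r; auto|split; [exists s; auto|]].
    intros a b a' b' [q [E Eq]]. unfold diag in E. injection E; intros E1 E2.
    subst q a b. split; intros c [x [y [Hx [Hy <-]]]]; simpl in *.
    + exists x. split; auto. apply L.
    + exists y. split; auto. apply L.
Qed.

Lemma fam_le_intro {A} (R : urel A) I (phi psi : I -> pset A) r :
  R r -> (forall i, lift r (phi i) (psi i)) -> fam_le (DR R) I phi psi.
Proof. intros Hr L. exists r. split; auto. intros U V [i [<- <-]]. auto. Qed.

Lemma fam_le_elim {A} (R : urel A) I (phi psi : I -> pset A) :
  fam_le (DR R) I phi psi -> exists r, R r /\ forall i, lift r (phi i) (psi i).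
Proof. intros [r [Hr L]]. exists r. split; auto. intros i. apply L. eauto. Qed.

Lemma lift_id {A} (U V : pset A) : (forall a, U a -> V a) -> lift (fun x y => x = y) U V.
Proof. intros H a Ha. eauto. Qed.

Theorem proposition5p3 (A : Type) (R : urel A) :
  is_uniform_preorder A R ->
  cartesian A R ->
  is_uniform_preorder (pset A) (DR R) /\
  cartesian (pset A) (DR R) /\
  cartesian_morphism R (DR R) (@eta A) /\
  indexed_frame (fam_fib (pset A)) (fam_le (DR R)) (@fam_reix (pset A)).
Proof.
  intros U C. pose proof C as [[tA HtA] [m Hm]].
  pose proof (DR_up R U) as UD.
  assert (CD : cartesian (pset A) (DR R)).
  { split; eexists; [apply topD_top | apply meetD_meet]; eauto. }
  pose proof (up_id R U) as Rid.
  split; [exact UD|split; [exact CD|split]].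
  - split; [exact C|split; [exact CD|split]].
    + intros r Hr. exists r. split; auto.
      intros P Q [a [a' [H [<- <-]]]] x Hx. unfold eta in *. subst. exists a'. auto.
    + intros topA meetA topB meetB HtopA HmeetA HtopB HmeetB. split.
      * pose proof (meetD_meet R meetA U HmeetA) as HmD.
        pose proof (adj_unique _ _ _ _ _ UD HmD HmeetB) as L1.
        pose proof (adj_unique _ _ _ _ _ UD HmeetB HmD) as L2.
        split.
        -- eapply leq_trans'; [exact UD| |apply (leq_pre _ _ _ (fprod eta) UD L1)].
           exists (fun x y => x = y). split; auto.
           intros P Q [p [<- <-]]. apply lift_id. intros x Hx. unfold eta in Hx. subst.
           destruct p. exists a, a0. unfold fprod, eta; simpl. auto.
        -- eapply leq_trans'; [exact UD|apply (leq_pre _ _ _ (fprod eta) UD L2)|].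
           exists (fun x y => x = y). split; auto.
           intros P Q [p [<- <-]]. apply lift_id. intros x [a [b [Ha [Hb <-]]]].
           destruct p. unfold fprod, eta in *; simpl in *. subst. reflexivity.
      * pose proof (topD_top R U) as HtD.
        pose proof (adj_unique _ _ _ _ _ UD HtD HtopB) as L1.
        pose proof (adj_unique _ _ _ _ _ UD HtopB HtD) as L2.
        split.
        -- eapply leq_trans'; [exact UD| |exact L1].
           exists (fun x y => x = y). split; auto.
           intros P Q [p [<- <-]]. apply lift_id. intros. exact I.
        -- eapply leq_trans'; [exact UD|exact L2|].
           destruct (top_rel R topA HtopA) as [r [Hr Lr]].
           exists r. split; auto.
           intros P Q [p [<- <-]] x _. destruct p. exists (topA tt). split; auto.
           reflexivity.
  - split.
    + split; [|split; [|split; [|split]]].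
      * intros I x. apply (fam_le_intro _ _ _ _ _ Rid). intros i. apply lift_id; auto.
      * intros I x y z H1 H2.
        destruct (fam_le_elim _ _ _ _ H1) as [r1 [Hr1 L1]].
        destruct (fam_le_elim _ _ _ _ H2) as [r2 [Hr2 L2]].
        apply (fam_le_intro _ _ _ _ _ (up_comp _ _ _ U Hr1 Hr2)).
        intros i a Ha. destruct (L1 i a Ha) as [b [Hb Rb]].
        destruct (L2 i b Hb) as [c [Hc Rc]]. eauto.
      * intros I J u x y H. destruct (fam_le_elim _ _ _ _ H) as [r [Hr L]].
        apply (fam_le_intro _ _ _ _ _ Hr). intros j. apply L.
      * intros I x. split; apply (fam_le_intro _ _ _ _ _ Rid); intros i; apply lift_id; auto.
      * intros I J K u v x. split; apply (fam_le_intro _ _ _ _ _ Rid); intros i; apply lift_id; auto.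
    + destruct (meet_proj R m Hm) as [rp [sp [Hrp [Hsp Lp]]]].
      exists (fun I (_ : I) => full), (fun I x y i => meetD m (x i, y i)),
        (fun I J u y i a => exists j, u j = i /\ y j a).
      split; [|split; [|split; [|split; [|split; [|split]]]]].
      * intros I x. apply (fam_le_intro _ _ _ _ _ Rid). intros i. apply lift_id. intros; exact Logic.I.
      * intros I x y z. split.
        -- intros H. destruct (fam_le_elim _ _ _ _ H) as [r [Hr L]]. split.
           ++ apply (fam_le_intro _ _ _ _ _ (up_comp _ _ _ U Hr Hrp)).
              intros i a Ha. destruct (L i a Ha) as [c [[x' [y' [Hx [Hy <-]]]] Rc]].
              exists x'. split; auto. exists (m (x', y')). split; auto. apply Lp.
           ++ apply (fam_le_intro _ _ _ _ _ (up_comp _ _ _ U Hr Hsp)).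
              intros i a Ha. destruct (L i a Ha) as [c [[x' [y' [Hx [Hy <-]]]] Rc]].
              exists y'. split; auto. exists (m (x', y')). split; auto. apply Lp.
        -- intros [H1 H2].
           destruct (fam_le_elim _ _ _ _ H1) as [r1 [Hr1 L1]].
           destruct (fam_le_elim _ _ _ _ H2) as [r2 [Hr2 L2]].
           apply (fam_le_intro _ _ _ _ _ (meet_pair _ _ _ _ U Hm Hr1 Hr2)).
           intros i a Ha. destruct (L1 i a Ha) as [b [Hb Rb]].
           destruct (L2 i a Ha) as [c [Hc Rc]].
           exists (m (b, c)). split.
           ++ exists b, c. auto.
           ++ exists b, c. auto.
      * intros I J u. split; apply (fam_le_intro _ _ _ _ _ Rid); intros i; apply lift_id; auto.
      * intros I J u x y. split; apply (fam_le_intro _ _ _ _ _ Rid); intros i; apply lift_id; auto.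
      * intros I J u y x. split.
        -- intros H. destruct (fam_le_elim _ _ _ _ H) as [r [Hr L]].
           apply (fam_le_intro _ _ _ _ _ Hr). intros j a Ha.
           apply (L (u j) a). exists j. auto.
        -- intros H. destruct (fam_le_elim _ _ _ _ H) as [r [Hr L]].
           apply (fam_le_intro _ _ _ _ _ Hr). intros i a [j [<- Ha]].
           apply (L j a Ha).
      * intros I J K P u v p q [Pc Pu] y. split;
          apply (fam_le_intro _ _ _ _ _ Rid); intros k; apply lift_id.
        -- intros a [j [E Ha]].
           destruct (Pu unit (fun _ => j) (fun _ => k) (fun _ => E)) as [h [Hh _]].
           destruct (Hh tt) as [E1 E2]. exists (h tt). split; auto.
           unfold fam_reix. rewrite E1. exact Ha.
        -- intros a [x [<- Ha]]. exists (p x). split; auto.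
      * intros I J u x y. split;
          apply (fam_le_intro _ _ _ _ _ Rid); intros i; apply lift_id.
        -- intros c [a [b [Ha [[j [<- Hb]] <-]]]]. simpl in *.
           exists j. split; auto. exists a, b. auto.
        -- intros c [j [<- [a [b [Ha [Hb <-]]]]]]. simpl in *.
           exists a, b. split; auto. split; auto. exists j. auto.
Qed.
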